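(* Let $X$ be a zero-dimensional compact metric space, $T:X\to X$ an aperiodic local homeomorphism, $N\ge1$ an integer and $m=2N$. Let $U\subseteq X$ be clopen and $V\subseteq X$ open such that: (1) the sets $T^{-2N+1}(\overline{U}),T^{-2N+2}(\overline{U}),\dots,T^{-N}(\overline{U})$ are pairwise disjoint, and $T^{-i}(T^i(U))=U$ for $i=1,\dots,N-1$; (2) the sets $T^{-2N+1}(T^N(\overline{V})),\dots,T^{-N}(T^N(\overline{V}))$ are pairwise disjoint; (3) there is $\eta>0$ such that for every $x\in\overline{V}$, every $y\in B(x,\eta)$ and every $1\le i\le N-1$, $T^{-i}(T^{i+N}(\{y\}))=\{T^N(y)\}$. Then there is a clopen set $W\subseteq X$ with $U\subseteq W$, $V\subseteq\bigcup_{0\le i\le m-1}T^{-i}(W)$, $T^{-i}(T^i(W))=W$ for $i=1,\dots,N-1$, and such that the sets $T^{-2N+1}(\overline{W}),\dots,T^{-N}(\overline{W})$ are pairwise disjoint.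
   Context: $X$ zero-dimensional: every point has a base of clopen neighbourhoods. Aperiodic: no $x$ with $T^n(x)=x$ for some $n\ge1$. For $j\ge0$, $T^{-j}(A)$ is the preimage of $A$ under $T^j$. $B(x,\eta)$ is the open ball. *)

(* Defs.v *)
From HB Require Import structures.
From mathcomp Require Import all_boot all_order all_algebra.
From mathcomp Require Import all_classical all_reals all_analysis.
Set Implicit Arguments. Unset Strict Implicit. Unset Printing Implicit Defensive.
Import Order.TTheory GRing.Theory Num.Theory.
Local Open Scope classical_set_scope.
Local Open Scope ring_scope.

Definition clopen_base_space (T : topologicalType) : Prop :=
  forall (x : T) (A : set T), nbhs x A ->
    exists B : set T, clopen B /\ B x /\ B `<=` A.

Definition aperiodic (T : Type) (f : T -> T) : Prop :=
  forall (n : nat) (x : T), (0 < n)%N -> iter n f x <> x.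

(* local homeomorphism: continuous, and every point has an open neighbourhood
   O on which f is injective and open (i.e. f restricted to O is a
   homeomorphism onto the open set f(O)). *)
Definition local_homeomorphism (T : topologicalType) (f : T -> T) : Prop :=
  continuous f /\
  forall x : T, exists O : set T,
    [/\ open O, O x,
        (forall y z, O y -> O z -> f y = f z -> y = z) &
        (forall A : set T, open A -> A `<=` O -> open (f @` A))].

(* Main.v *)
Require Import Defs.
From mathcomp Require Import zify.
From HB Require Import structures.
From mathcomp Require Import all_boot all_order all_algebra.
From mathcomp Require Import all_classical all_reals all_analysis.
Import Order.TTheory GRing.Theory Num.Theory.
Local Open Scope classical_set_scope.
Local Open Scope ring_scope.

Definition ptT (X : topologicalType) (x0 : X) : Type := X.
HB.instance Definition _ (X : topologicalType) (x0 : X) := Topological.copy (ptT X x0) X.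
HB.instance Definition _ (X : topologicalType) (x0 : X) := isPointed.Build (ptT X x0) x0.

Lemma sep_clopen_p (X : ptopologicalType) (K O : set X) :
  clopen_base_space X -> compact K -> open O -> K `<=` O ->
  exists C, [/\ clopen C, K `<=` C & C `<=` O].
Proof.
move=> cb cK oO KO.
have := cK; rewrite (@compact_cover X) => /(_ (set X) [set B | clopen B /\ B `<=` O] id).
case.
- by move=> B [[]].
- move=> x Kx.
  have [B [cB [Bx BO]]] := cb x O (open_nbhs_nbhs (conj oO (KO x Kx))).
  by exists B.
move=> D' sD KC.
move: KC; set C := cover _ id => KC.
exists C; split => //.
- split; first by rewrite /C /cover; apply: bigcup_open => B BD; have /set_mem [[]] := sD B BD.
  rewrite /C /cover; apply: closed_bigcup; first exact: finite_fset.
  by move=> B BD; have /set_mem [[]] := sD B BD.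
- by move=> x [B BD Bx]; have /set_mem [_ BO] := sD B BD; exact: BO.
Qed.

Lemma sep_clopen (X : topologicalType) (K O : set X) :
  clopen_base_space X -> compact K -> open O -> K `<=` O ->
  exists C, [/\ clopen C, K `<=` C & C `<=` O].
Proof.
move=> cb cK oO KO.
have [[x0 _]|nK] := pselect (exists x, K x); last first.
  exists set0; split => //; first exact: clopen0.
  by move=> x Kx; apply: nK; exists x.
exact: (@sep_clopen_p (ptT X x0) K O cb cK oO KO).
Qed.

Lemma open_map_lh (X : topologicalType) (f : X -> X) :
  local_homeomorphism f -> forall A, open A -> open (f @` A).
Proof.
move=> [_ lh] A oA.
have -> : f @` A = \bigcup_(x in A) (f @` (A `&` projT1 (cid (lh x)))).
  apply/seteqP; split => y.
  - case=> x Ax <-; exists x => //; exists x => //; split => //.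
    by case: (cid (lh x)) => O /= [].
  - by case=> x Ax [z [Az _] <-]; exists z.
apply: bigcup_open => x Ax.
case: (cid (lh x)) => O /= [oO Ox _ h]; apply: h; first exact: openI.
by move=> z [].
Qed.

Lemma open_map_iter (X : topologicalType) (f : X -> X) n :
  (forall A, open A -> open (f @` A)) -> forall A, open A -> open (iter n f @` A).
Proof.
move=> h; elim: n => [|n IH] A oA /=.
  by rewrite image_id.
have -> : (fun x => f (iter n f x)) @` A = f @` (iter n f @` A).
  by rewrite -image_comp.
exact/h/IH.
Qed.

Lemma cont_iter (X : topologicalType) (f : X -> X) n :
  continuous f -> continuous (iter n f).
Proof.
move=> cf; elim: n => [|n IH] /= x; first exact: cvg_id.
exact: (continuous_comp (IH x) (cf _)).
Qed.
Theorem lemma4p6 (R : realType) (X : metricType R) (T : X -> X)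
  (N : nat) (U V : set X) :
  clopen_base_space X -> compact [set: X] ->
  local_homeomorphism T -> aperiodic T -> (1 <= N)%N ->
  clopen U -> open V ->
  (forall i j, (N <= i)%N -> (i < j)%N -> (j <= 2 * N - 1)%N ->
     iter i T @^-1` closure U `&` iter j T @^-1` closure U = set0) ->
  (forall i, (1 <= i)%N -> (i <= N - 1)%N ->
     iter i T @^-1` (iter i T @` U) = U) ->
  (forall i j, (N <= i)%N -> (i < j)%N -> (j <= 2 * N - 1)%N ->
     iter i T @^-1` (iter N T @` closure V)
       `&` iter j T @^-1` (iter N T @` closure V) = set0) ->
  (exists eta : R, 0 < eta /\
     forall x y i, closure V x -> ball x eta y -> (1 <= i)%N -> (i <= N - 1)%N ->
       iter i T @^-1` (iter (i + N) T @` [set y]) = [set iter N T y]) ->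
  exists W : set X,
    [/\ clopen W, U `<=` W,
        V `<=` \bigcup_(i in [set i : nat | (i < 2 * N)%N]) iter i T @^-1` W,
        (forall i, (1 <= i)%N -> (i <= N - 1)%N ->
           iter i T @^-1` (iter i T @` W) = W) &
        (forall i j, (N <= i)%N -> (i < j)%N -> (j <= 2 * N - 1)%N ->
           iter i T @^-1` closure W `&` iter j T @^-1` closure W = set0)].

Proof.
move=> cb cX lh _ N1 [oU cU] oV h1 hsatU h2 [eta [eta0 h3]].
have cT := lh.1.
have hX : hausdorff_space X := @metric_hausdorff R X.
have omap n := @open_map_iter _ T n (@open_map_lh _ T lh).
have citer n := @cont_iter _ T n cT.
have cmp_closed (K : set X) : closed K -> compact K by move=> cK; exact: subclosed_compact cK cX (@subsetT _ K).
have img_cmp n (K : set X) : closed K -> compact (iter n T @` K).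
  by move=> cK; apply: continuous_compact; [exact: continuous_subspaceT|exact: cmp_closed].
have img_cl n (K : set X) : closed K -> closed (iter n T @` K).
  by move=> cK; apply: compact_closed => //; exact: img_cmp.
have pre_cl n (K : set X) : closed K -> closed (iter n T @^-1` K).
  by move=> cK; move: (citer n) => /continuous_closedP; apply.
have pre_op n (K : set X) : open K -> open (iter n T @^-1` K).
  by move=> oK; move: (citer n) => /continuousP; apply.
set F := iter N T.
set A := F @` closure V.
have cA : compact A by exact: img_cmp (@closed_closure _ V).
have clA : closed A by exact: img_cl (@closed_closure _ V).
set TNX := F @` setT.
have clTNX : closed TNX by exact: img_cl closedT.
set F1 := \bigcup_(d in [set d | (d < N.-1)%N]) (TNX `&` iter d.+1 T @^-1` A).
have clF1 : closed F1.
  apply: closed_bigcup; first exact: finite_II.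
  by move=> d _; apply: closedI => //; exact: pre_cl.
have AF1 : A `<=` ~` F1.
  move=> _ [x Vx <-] [d /= dN [_ hA]].
  have := h2 N (d.+1 + N)%N (leqnn _) ltac:(lia) ltac:(lia).
  move=> /seteqP [/(_ x) + _]; apply.
  split; first by exists x.
  by rewrite /= iterD.
have [C1 [cC1 AC1 C1F1]] := @sep_clopen _ _ _ cb cA (closed_openC clF1) AF1.
set H := \bigcup_(d in [set d | (d < N.-1)%N]) (iter d.+1 T @` (TNX `&` C1)).
have clH : closed H.
  apply: closed_bigcup; first exact: finite_II.
  by move=> d _; apply: img_cl; apply: closedI => //; case: cC1.
have AH : A `<=` ~` H.
  move=> w Aw [d /= dN [y [TNXy C1y] yw]].
  apply: (C1F1 y C1y); exists d => //; split => //=.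
  by rewrite yw.
have [C2 [cC2 AC2 C2H]] := @sep_clopen _ _ _ cb cA (closed_openC clH) AH.
set O := F @` (\bigcup_(x in closure V) (ball x eta)°).
have oO : open O by apply: omap; apply: bigcup_open => x _; exact: open_interior.
have AO : A `<=` O.
  by move=> _ [x Vx <-]; exists x => //; exists x => //; exact: nbhsx_ballx.
have [C3 [cC3 AC3 C3O]] := @sep_clopen _ _ _ cb cA oO AO.
set C := C1 `&` C2 `&` C3.
have cC : clopen C by apply: clopenI => //; apply: clopenI.
set E := \bigcup_(d in [set d | (d < N)%N]) (iter d T @^-1` U `|` iter d T @` U).
have cE : clopen E.
  split.
    apply: bigcup_open => d _; apply: openU; first exact: pre_op.
    exact: omap.
  apply: closed_bigcup; first exact: finite_II.
  by move=> d _; apply: closedU; [exact: pre_cl|exact: img_cl].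
set B := C `&` ~` E.
have cB : clopen B by apply: clopenI => //; exact: clopenC.
exists (U `|` B); split.
- by apply: clopenU.
- by move=> x Ux; left.
- move=> x Vx.
  have Ay : A (F x) by exists x => //; exact: subset_closure.
  have Cy : C (F x) by split; [split|]; [exact: AC1|exact: AC2|exact: AC3].
  have [Ey|nEy] := pselect (E (F x)); last first.
    by exists N; [rewrite /=; lia|right].
  case: Ey => d /= dN [Ud|[u Uu ud]].
    by exists (d + N)%N; [rewrite /=; lia|left; rewrite /= iterD].
  case: d dN ud => [|d] dN ud.
    by exists N; [rewrite /=; lia|left; rewrite /= -/F -ud].
  exists (N - d.+1)%N; first by rewrite /=; lia.
  left; rewrite /= -(hsatU d.+1 ltac:(lia) ltac:(lia)) /=.
  exists u => //; apply: (etrans ud); symmetry.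
  change (iter d.+1 T (iter (N - d.+1) T x) = F x).
  rewrite -iterD subnKC //; lia.
- move=> i i1 iN; apply/seteqP; split => z; last by move=> Wz; exists z.
  move=> [w Ww wz].
  case: Ww => [Uw|Bw].
    by left; rewrite -(hsatU i i1 iN); exists w.
  have [[[_ _] C3w] _] := Bw.
  have [y [x Vx bxy] yw] := C3O w C3w.
  have := h3 x y i Vx (interior_subset bxy) i1 iN.
  move=> /seteqP [/(_ z) h _].
  have : [set F y] z.
    apply: h; exists y => //.
    by rewrite iterD -/F yw wz.
  by move=> ->; rewrite yw; right.
- move=> i j Ni ij jN.
  have clW : closure (U `|` B) = U `|` B.
    by apply/esym/closure_id; case: (clopenU (conj oU cU) cB).
  rewrite clW; apply/seteqP; split => // z [Wi Wj].
  have [y yE] : exists y, y = iter i T z by eexists.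
  have jE : iter j T z = iter (j - i) T y.
    by rewrite yE -iterD subnK // ltnW.
  have TNXy : TNX y.
    by exists (iter (i - N) T z) => //; rewrite /F -iterD subnKC // yE.
  move: Wi Wj; rewrite /= -yE jE.
  case => [Uy|By] [Ud|Bd].
  + have := h1 i j Ni ij jN; move=> /seteqP [/(_ z) + _]; apply.
    by split => /=; apply: subset_closure => //; rewrite ?jE // -yE.
  + apply: Bd.2; exists (j - i)%N; [rewrite /=; lia|right; by exists y].
  + by apply: By.2; exists (j - i)%N; [rewrite /=; lia|left].
  + have [[[C1y _] _] _] := By.
    have [[[_ C2d] _] _] := Bd.
    apply: (C2H _ C2d); exists (j - i).-1; first by rewrite /=; lia.
    exists y => //; rewrite prednK //; lia.
Qed.
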